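(* Let $(\mathtt V_k,\mathcal F_k)$ be a nonnegative adapted sequence satisfying, almost surely for all $k$, $$\mathbb E[\mathtt V_k|\mathcal F_{k-1}]\le\Big(1-\frac ak+\gamma_k\Big)\mathtt V_{k-1}+\frac{C}{k^b},$$ where $a>0$, $b>1$, $C>0$ are constants and $(\gamma_k)$ is a nonnegative deterministic sequence with $\sum_k\gamma_k<\infty$. Then almost surely $\mathtt V_k=O(k^{-a})$ if $b-a>1$, and $\mathtt V_k=O\big((\ln k)^2/k^{b-1}\big)$ if $b-a\le1$. *)

(* Defs.v *)
From HB Require Import structures.
From mathcomp Require Import all_boot all_order all_algebra.
From mathcomp Require Import all_classical all_reals all_analysis.
From mathcomp Require Import measurable_realfun.
Set Implicit Arguments. Unset Strict Implicit. Unset Printing Implicit Defensive.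
Import Order.TTheory GRing.Theory Num.Theory.
Import numFieldNormedType.Exports.
Local Open Scope classical_set_scope.
Local Open Scope ring_scope.

Definition meas_wrt {d} {T : measurableType d} {d'} {U : measurableType d'}
  (G : set (set T)) (f : T -> U) : Prop :=
  forall B : set U, measurable B -> G (f @^-1` B).

Definition filtration {d} {T : measurableType d} (F : nat -> set (set T)) : Prop :=
  forall n, [/\ sigma_algebra setT (F n), F n `<=` measurable & F n `<=` F n.+1].

(* Y is a version of the conditional expectation E[X | G] of the nonnegative
   random variable X (values in [0, +oo], so no integrability is needed):
   Y is G-measurable, nonnegative, and has the same integral as X on every
   G-measurable set. *)
Definition cond_exp_version {d} {T : measurableType d} {R : realType}
  (P : probability T R) (G : set (set T)) (X : T -> R) (Y : T -> \bar R) : Prop :=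
  [/\ meas_wrt G Y, (forall x, 0 <= Y x)%E &
      forall A, G A -> (\int[P]_(x in A) Y x = \int[P]_(x in A) (X x)%:E)%E].

(* Main.v *)
Require Import Defs.
From HB Require Import structures.
From mathcomp Require Import all_boot all_order all_algebra.
From mathcomp Require Import all_classical all_reals all_analysis.
From mathcomp Require Import measurable_realfun.
Import Order.TTheory GRing.Theory Num.Theory.
Import numFieldNormedType.Exports.
Local Open Scope classical_set_scope.
Local Open Scope ring_scope.
Set Warnings "-notation-overridden,-ambiguous-paths,-notation-incompatible-prefix".
From mathcomp Require Import ring lra.
Set Implicit Arguments. Unset Strict Implicit. Unset Printing Implicit Defensive.
Section SA.
Context d (T : measurableType d).
Variable G : set (set T).
Hypothesis hG : sigma_algebra setT G.

Lemma sa_set0 : G set0. Proof. by case: hG. Qed.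
Lemma sa_C A : G A -> G (~` A).
Proof. by case: hG => _ GC _ GA; rewrite -setTD; apply: GC. Qed.
Lemma sa_U A B : G A -> G B -> G (A `|` B).
Proof. by case: hG => _ _ GU GA GB; rewrite -bigcup2E; apply: GU => -[|[|n]] //=; exact: sa_set0. Qed.
Lemma sa_I A B : G A -> G B -> G (A `&` B).
Proof. by move=> GA GB; rewrite -[A]setCK -[B]setCK -setCU; apply/sa_C/sa_U; apply: sa_C. Qed.
Lemma sa_D A B : G A -> G B -> G (A `\` B).
Proof. by move=> GA GB; rewrite setDE; apply: sa_I => //; exact: sa_C. Qed.
End SA.
Section Core.
Context d (T : measurableType d) (R : realType) (P : probability T R).
Variable F : nat -> set (set T).
Hypothesis hF : filtration F.

Lemma F_meas n A : F n A -> measurable A.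
Proof. by have [_ h _] := hF n; apply: h. Qed.

Lemma F_mono m n : (m <= n)%N -> F m `<=` F n.
Proof.
elim: n => [|n IH]; first by rewrite leqn0 => /eqP ->.
rewrite leq_eqVlt => /orP [/eqP -> //|]; rewrite ltnS => mn.
have [_ _ h] := hF n; exact: subset_trans (IH mn) h.
Qed.

Lemma meas_wrt_pre n (f : T -> R) (i : interval R) :
  meas_wrt (F n) f -> F n (f @^-1` [set` i]).
Proof. by move=> h; apply: h; exact: measurable_itv. Qed.

Lemma meas_wrt_mfun n (f : T -> R) : meas_wrt (F n) f ->
  measurable_fun setT (fun x => (f x)%:E).
Proof.
move=> h; apply/measurable_EFinP => _ Y mY; rewrite setTI.
apply: (@F_meas n); exact: h.
Qed.

Lemma split_int (D A : set T) (f : T -> R) (l : R) :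
  measurable D -> measurable A -> measurable_fun setT (fun x => (f x)%:E) ->
  0 <= l -> (forall x, 0 <= f x) -> (forall x, A x -> l <= f x) ->
  (l%:E * P (D `&` A) + \int[P]_(x in D `\` A) (f x)%:E <=
   \int[P]_(x in D) (f x)%:E)%E.
Proof.
move=> mD mA mf l0 f0 Al.
rewrite -{3}(setUIDK D A) ge0_integral_setU //; first last.
- by rewrite disj_set2E; apply/eqP/seteqP; split => x //= [[_ ?] [_ ?]].
- by move=> x _; rewrite lee_fin.
- exact: measurable_funS mf.
- exact: measurableD.
- exact: measurableI.
apply: leeD => //.
rewrite -integral_cst; last exact: measurableI.
apply: ge0_le_integral => //.
- exact: measurableI.
- exact: measurable_funS mf.
- by move=> x [_ Ax]; rewrite /cst lee_fin Al.
Qed.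
End Core.
Section Core2.
Context d (T : measurableType d) (R : realType) (P : probability T R).
Variable F : nat -> set (set T).
Hypothesis hF : filtration F.
Variables (W : nat -> T -> R) (k0 : nat).
Hypothesis mW : forall n, meas_wrt (F n) (W n).
Hypothesis W0 : forall n x, 0 <= W n x.

Definition Ge n (l : R) := W n @^-1` [set` `[l, +oo[%R].
Fixpoint Hit (l : R) (n : nat) : set T :=
  match n with
  | 0 => if k0 == 0%N then Ge 0 l else set0
  | n'.+1 => if (k0 <= n'.+1)%N then Hit l n' `|` Ge n'.+1 l else set0
  end.

Lemma GeE n l x : Ge n l x <-> l <= W n x.
Proof. by rewrite /Ge /= in_itv /= andbT. Qed.

Lemma Ge_F n l : F n (Ge n l).
Proof. exact: meas_wrt_pre. Qed.

Lemma Hit_F l n : F n (Hit l n).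
Proof.
elim: n => [|n IH] /=.
  by case: eqP => _; [exact: Ge_F| case: (hF 0%N) => sa _ _; exact: sa_set0 sa].
case: (hF n.+1) => sa _ _; case: ifP => _; last exact: sa_set0 sa.
apply: sa_U => //; last exact: Ge_F.
apply: (F_mono hF (leqnSn n)); exact: IH.
Qed.

Lemma Hit_lt l n : (n < k0)%N -> Hit l n = set0.
Proof.
case: n => [|n] /= h; first by rewrite (negbTE (lt0n_neq0 h)).
by rewrite leqNgt h.
Qed.

Lemma Hit_k0 l : Hit l k0 = Ge k0 l.
Proof.
have := Hit_lt l; case E : k0 => [|m] H /=; rewrite E ?eqxx //.
by rewrite leqnn H ?set0U.
Qed.

Lemma Hit_S l n : (k0 <= n)%N -> Hit l n.+1 = Hit l n `|` Ge n.+1 l.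
Proof. by move=> h /=; rewrite (leqW h). Qed.

Lemma Hit_in l n k x : (k0 <= k)%N -> (k <= n)%N -> l <= W k x -> Hit l n x.
Proof.
move=> h1 h2 h3; elim: n h2 => [|n IH].
  rewrite leqn0 => /eqP k0E; subst k.
  by move: h1; rewrite leqn0 => /eqP h1 /=; rewrite h1 eqxx; apply/GeE.
rewrite leq_eqVlt => /orP [/eqP kE|]; last first.
  by rewrite ltnS => kn; rewrite Hit_S ?(leq_trans h1 kn) //; left; exact: IH.
subst k => /=; rewrite h1; right; exact/GeE.
Qed.

Lemma Hit_mono l n : Hit l n `<=` Hit l n.+1.
Proof.
case: (leqP k0 n) => h; first by rewrite Hit_S //; exact: subsetUl.
by rewrite Hit_lt.
Qed.

Lemma Hit_meas l n : measurable (Hit l n).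
Proof. exact: (F_meas hF (Hit_F l n)). Qed.

Lemma mWE n : measurable_fun setT (fun x => (W n x)%:E).
Proof. exact: (meas_wrt_mfun hF (mW n)). Qed.

Variables (e S : nat -> R).
Hypothesis e0 : forall n, 0 <= e n.
Hypothesis Sinc : forall n, (k0 <= n)%N -> S n + e n.+1 <= S n.+1.
Hypothesis hyp : forall n, (k0 <= n)%N -> forall A, F n A ->
     (\int[P]_(x in A) (W n.+1 x)%:E <= \int[P]_(x in A) (W n x)%:E + (e n.+1)%:E * P A)%E.

Lemma inv_base (B : set T) l : F k0 B -> 0 <= l ->
  (l%:E * P (B `&` Hit l k0) + \int[P]_(x in B `\` Hit l k0) (W k0 x)%:E <=
   \int[P]_(x in B) (W k0 x)%:E + (S k0 - S k0)%:E)%E.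
Proof.
move=> FB l0; rewrite subrr adde0 Hit_k0.
apply: split_int => //; first exact: (F_meas hF FB).
- exact: (F_meas hF (Ge_F k0 l)).
- exact: mWE.
- by move=> x /GeE.
Qed.

Lemma inv_step (B : set T) l n : F k0 B -> 0 <= l -> (k0 <= n)%N ->
  (l%:E * P (B `&` Hit l n) + \int[P]_(x in B `\` Hit l n) (W n x)%:E <=
   \int[P]_(x in B) (W k0 x)%:E + (S n - S k0)%:E)%E ->
  (l%:E * P (B `&` Hit l n.+1) + \int[P]_(x in B `\` Hit l n.+1) (W n.+1 x)%:E <=
   \int[P]_(x in B) (W k0 x)%:E + (S n.+1 - S k0)%:E)%E.
Proof.
move=> FB l0 hn IH.
set D := B `\` Hit l n.
have FD : F n D by apply: sa_D; [case: (hF n)|exact: (F_mono hF hn)|exact: Hit_F].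
have mD : measurable D := F_meas hF FD.
have mG : measurable (Ge n.+1 l) := F_meas hF (Ge_F n.+1 l).
have mB : measurable B := F_meas hF FB.
have h1 := hyp hn FD.
have h2 := @split_int _ _ _ P D (Ge n.+1 l) (W n.+1) l mD mG (mWE n.+1) l0 (W0 n.+1)
   (fun x => proj1 (GeE n.+1 l x)).
have E1 : B `&` Hit l n.+1 = (B `&` Hit l n) `|` (D `&` Ge n.+1 l).
  rewrite Hit_S // /D; apply/seteqP; split => x /=.
    move=> [Bx [Hx|Gx]]; first by left.
    by case: (pselect (Hit l n x)) => Hx; [left|right].
  by move=> [[Bx Hx]|[[Bx _] Gx]]; split => //; [left|right].
have E2 : D `\` Ge n.+1 l = B `\` Hit l n.+1.
  rewrite Hit_S // /D; apply/seteqP; split => x /=.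
    by move=> [[Bx Hx] Gx]; split => // -[].
  by move=> [Bx HG]; split; [split => // Hx; apply: HG; left|move=> Gx; apply: HG; right].
have E3 : (B `&` Hit l n) `&` (D `&` Ge n.+1 l) = set0.
  by apply/seteqP; split => x //= [[_ Hx] [[_ Hx'] _]].
rewrite E1 measureU //; try by apply: measurableI => //; exact: Hit_meas.
rewrite [X in (l%:E * X)%E](_ : _ = (P (B `&` Hit l n) + P (D `&` Ge n.+1 l))%E) //.
rewrite -E2 ge0_muleDr // -[X in (X <= _)%E]addeA.
apply: (le_trans (leeD (lexx _) h2)).
apply: (le_trans (leeD (lexx _) h1)).
have eP : ((e n.+1)%:E * P D <= (e n.+1)%:E)%E.
  by rewrite -[leRHS]mule1; apply: lee_wpmul2l; [rewrite lee_fin|exact: probability_le1].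
apply: (le_trans (leeD (lexx _) (leeD (lexx _) eP))).
rewrite [X in (X <= _)%E]addeA; apply: (le_trans (leeD IH (lexx _))).
rewrite -[X in (X <= _)%E]addeA -EFinD; apply: leeD => //; rewrite lee_fin.
have := Sinc hn; lra.
Qed.

Lemma inv_all (B : set T) l n : F k0 B -> 0 <= l -> (k0 <= n)%N ->
  (l%:E * P (B `&` Hit l n) + \int[P]_(x in B `\` Hit l n) (W n x)%:E <=
   \int[P]_(x in B) (W k0 x)%:E + (S n - S k0)%:E)%E.
Proof.
move=> FB l0 /subnK <-; elim: (n - k0)%N => [|j IH]; first by rewrite add0n; exact: inv_base.
rewrite addSn; apply: inv_step => //; exact: leq_addl.
Qed.

Hypothesis Sle0 : forall n, S n <= 0.

Definition Bm (m : nat) := W k0 @^-1` [set` `]-oo, (m%:R : R)]%R].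

Lemma Bm_F m : F k0 (Bm m).
Proof. exact: meas_wrt_pre. Qed.

Lemma bound_n m l n : 0 < l ->
  (l%:E * P (Bm m `&` Hit l n) <= (m%:R - S k0)%:E)%E.
Proof.
move=> l0.
have c0 : 0 <= m%:R - S k0 by have := Sle0 k0; have : (0 <= m%:R :> R) by []; lra.
case: (leqP k0 n) => hn; last by rewrite Hit_lt // setI0 measure0 mule0 lee_fin.
have h := inv_all (Bm_F m) (ltW l0) hn.
have mB : measurable (Bm m) := F_meas hF (Bm_F m).
have s1 : (l%:E * P (Bm m `&` Hit l n) <= l%:E * P (Bm m `&` Hit l n) +
    \int[P]_(x in Bm m `\` Hit l n) (W n x)%:E)%E.
  rewrite -[X in (X <= _)%E]adde0; apply: leeD => //; apply: integral_ge0 => x _.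
  by rewrite lee_fin.
apply: (le_trans s1); apply: (le_trans h); rewrite [leRHS]EFinD; apply: leeD; last by rewrite lee_fin; have := Sle0 n; lra.
have s2 : (\int[P]_(x in Bm m) (W k0 x)%:E <= \int[P]_(x in Bm m) (cst (m%:R : R)%:E x))%E.
  apply: ge0_le_integral => //; [by move=> x _; rewrite lee_fin|exact: measurable_funS (mWE k0)].
apply: (le_trans s2).
rewrite integral_cst // -[leRHS]mule1; apply: lee_wpmul2l; first by rewrite lee_fin.
exact: probability_le1.
Qed.

Definition Um m l := \bigcup_n (Bm m `&` Hit l n).

Lemma Um_meas m l : measurable (Um m l).
Proof.
apply: bigcupT_measurable => n; apply: measurableI; last exact: Hit_meas.
exact: (F_meas hF (Bm_F m)).
Qed.

Lemma bound_U m l : 0 < l -> (P (Um m l) <= (l^-1)%:E * (m%:R - S k0)%:E)%E.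
Proof.
move=> l0.
have h : (P \o (fun n => Bm m `&` Hit l n)) @ \oo --> P (Um m l).
  apply: nondecreasing_cvg_mu.
  - move=> n; apply: measurableI; [exact: (F_meas hF (Bm_F m))|exact: Hit_meas].
  - exact: Um_meas.
  - apply/nondecreasing_seqP => n; apply/subsetPset; apply: setIS; exact: Hit_mono.
rewrite -(cvg_lim _ h) //; apply: lime_le; first by apply/cvg_ex; eexists; exact: h.
apply: nearW => n /=; rewrite lee_pdivlMl //; exact: bound_n.
Qed.

Definition Nm m := \bigcap_j Um m (j.+1%:R).

Lemma Nm_meas m : measurable (Nm m).
Proof. by apply: bigcapT_measurable => j; exact: Um_meas. Qed.

Lemma Nm0 m : P (Nm m) = 0%E.
Proof.
set c := m%:R - S k0.
have c0 : 0 <= c by rewrite /c; have := Sle0 k0; have : (0 <= m%:R :> R) by []; lra.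
have hj j : (P (Nm m) <= ((j.+1%:R : R)^-1)%:E * c%:E)%E.
  apply: le_trans (bound_U m _) => //.
  by apply: le_measure; rewrite ?inE; [exact: Nm_meas|exact: Um_meas|exact: bigcap_inf].
have fin : P (Nm m) \is a fin_num by apply: fin_num_measure; exact: Nm_meas.
rewrite -(fineK fin) in hj *; apply/eqP; rewrite eqe; apply/eqP.
set r := fine (P (Nm m)) in hj *.
have r0 : 0 <= r by rewrite /r fine_ge0 // measure_ge0.
apply/eqP; rewrite eq_le r0 andbT; apply/negP => /negP; rewrite -ltNge => rp.
have hb := archi_boundP (divr_ge0 c0 (ltW rp)).
set j := Num.bound (c / r) in hb.
have := hj j; rewrite -EFinM lee_fin ler_pdivlMl ?ltr0Sn //.
move: hb; rewrite ltr_pdivrMr // => hb.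
rewrite -addn1 natrD mulrDl mul1r => h; lra.
Qed.

Lemma core_ae : {ae P, forall x, exists M : R, forall n, (k0 <= n)%N -> W n x <= M}.
Proof.
apply: (@negligibleS _ _ _ P (\bigcup_m Nm m)); last first.
  apply: negligible_bigcup => m; exists (Nm m); split => //; [exact: Nm_meas|exact: Nm0].
move=> x /= Hx.
exists (Num.bound (W k0 x)) => //.
move=> j _.
have [n [hn hW]] : exists n, (k0 <= n)%N /\ j.+1%:R < W n x.
  apply: contrapT => H; apply: Hx; exists j.+1%:R => n hn.
  rewrite leNgt; apply/negP => lt; apply: H; by exists n.
exists n => //; split.
  rewrite /Bm /= in_itv /=; exact: ltW (archi_boundP (W0 k0 x)).
exact: Hit_in hn (leqnn n) (ltW hW).
Qed.
End Core2.
Section StepB.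
Context d (T : measurableType d) (R : realType) (P : probability T R).
Variable F : nat -> set (set T).
Hypothesis hF : filtration F.

Lemma stepB (V : nat -> T -> R) (v : nat -> R) (n : nat) (q c : R)
  (Y : T -> \bar R) (A : set T) :
  meas_wrt (F n) (V n) -> meas_wrt (F n.+1) (V n.+1) ->
  (forall x, 0 <= V n x) -> (forall x, 0 <= V n.+1 x) ->
  cond_exp_version P (F n) (V n.+1) Y ->
  {ae P, forall x, (Y x <= (q * V n x + c)%:E)%E} ->
  0 <= q -> 0 <= c -> 0 < v n -> 0 < v n.+1 -> q * v n <= v n.+1 -> F n A ->
  (\int[P]_(x in A) (V n.+1 x / v n.+1)%:E <=
   \int[P]_(x in A) (V n x / v n)%:E + (c / v n.+1)%:E * P A)%E.
Proof.
move=> mVn mVn1 V0 V10 [mY Y0 hY] hae q0 c0 vn0 vn10 hq FA.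
have mA : measurable A := F_meas hF FA.
have mVnE := meas_wrt_mfun hF mVn.
have mVn1E := meas_wrt_mfun hF mVn1.
have mYE : measurable_fun setT Y.
  by move=> _ B mB; rewrite setTI; apply: (F_meas hF); exact: mY.
have e1 : forall (f : T -> R) (w : R), measurable_fun setT (fun x => (f x)%:E) ->
    (forall x, 0 <= f x) -> 0 <= w ->
    (\int[P]_(x in A) (f x * w)%:E = w%:E * \int[P]_(x in A) (f x)%:E)%E.
  move=> f w mf f0 w0.
  rewrite -ge0_integralZl_EFin //; last exact: measurable_funS mf.
    by apply: eq_integral => x _; rewrite EFinM muleC.
  by move=> x _; rewrite lee_fin.
rewrite !e1 //; try by rewrite invr_ge0 ltW.
rewrite -(hY A FA).
have h1 : (\int[P]_(x in A) Y x <= \int[P]_(x in A) ((q * V n x)%:E + c%:E))%E.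
  apply: ae_ge0_le_integral => //.
  - exact: measurable_funS mYE.
  - by move=> x _; rewrite adde_ge0 // lee_fin ?mulr_ge0.
  - apply: emeasurable_funD; last exact: measurable_cst.
    under eq_fun do rewrite EFinM.
    apply: emeasurable_funM; first exact: measurable_cst.
    exact: measurable_funS mVnE.
  - by apply: filterS hae => x hx _; rewrite -EFinD.
rewrite ge0_integralD // in h1; first last.
- under eq_fun do rewrite EFinM.
  apply: emeasurable_funM; first exact: measurable_cst.
  exact: measurable_funS mVnE.
- by move=> x _; rewrite lee_fin mulr_ge0.
rewrite integral_cst // in h1.
have e2 : (\int[P]_(x in A) (q * V n x)%:E = \int[P]_(x in A) (q%:E * (V n x)%:E))%E.
  by apply: eq_integral => x _; rewrite EFinM.
rewrite e2 in h1.
rewrite ge0_integralZl_EFin // in h1; first last.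
- exact: measurable_funS mVnE.
- by move=> x _; rewrite lee_fin.
have vi0 : (0 <= (v n.+1)^-1)%R by rewrite invr_ge0 ltW.
apply: le_trans (lee_wpmul2l _ h1) _; first by rewrite lee_fin.
rewrite ge0_muleDr; first last.
- by rewrite mule_ge0 // lee_fin.
- by rewrite mule_ge0 // ?lee_fin ?integral_ge0 // => x _; rewrite lee_fin.
apply: leeD.
  rewrite muleA -EFinM; apply: lee_wpmul2r; first by apply: integral_ge0 => x _; rewrite lee_fin.
  by rewrite lee_fin mulrC ler_pdivrMr // ler_pdivlMl // mulrC.
by rewrite muleA -EFinM mulrC.
Qed.
End StepB.
Section Det.
Variable R : realType.

Lemma ln_up (y : R) : 0 < y -> ln (y + 1) - ln y <= y^-1.
Proof.
move=> y0.
have h : (y + 1) / y <= expR (y^-1).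
  by rewrite mulrDl divff ?gt_eqF // mul1r; exact: expR_ge1Dx.
rewrite -lnV ?posrE // -lnM ?posrE ?invr_gt0 ?addr_gt0 //.
by rewrite -[leRHS](expRK) ler_ln ?posrE ?expR_gt0 ?divr_gt0 ?addr_gt0.
Qed.

Lemma ln_low (y : R) : 0 < y -> (y + 1)^-1 <= ln (y + 1) - ln y.
Proof.
move=> y0.
have y1 : 0 < y + 1 by rewrite addr_gt0.
have h : y / (y + 1) <= expR (- (y + 1)^-1).
  have -> : y / (y + 1) = 1 + - (y + 1)^-1.
    by field; rewrite gt_eqF.
  exact: expR_ge1Dx.
have : ln (y / (y + 1)) <= - (y + 1)^-1.
  by rewrite -[leRHS](expRK) ler_ln ?posrE ?expR_gt0 ?divr_gt0.
rewrite lnM ?posrE ?invr_gt0 // lnV ?posrE //; lra.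
Qed.

Lemma exp_low (x : R) : 0 <= x -> x <= 2^-1 -> expR (- (x + 2 * x ^+ 2)) <= 1 - x.
Proof.
move=> x0 x2.
have x1 : 0 < 1 - x by lra.
have h1 : (1 - x)^-1 <= expR (x / (1 - x)).
  have e : (1 - x)^-1 = 1 + x / (1 - x).
    by field; rewrite gt_eqF.
  rewrite {1}e; exact: expR_ge1Dx.
have h2 : x / (1 - x) <= x + 2 * x ^+ 2.
  rewrite ler_pdivrMr //.
  have : 0 <= x ^+ 2 * (1 - 2 * x) by apply: mulr_ge0; [exact: sqr_ge0|lra].
  move=> h; nra.
rewrite expRN -[leRHS]invrK ler_pV2.
- apply: (le_trans h1); by rewrite ler_expR.
- by rewrite inE /= unitfE gt_eqF ?expR_gt0.
- by rewrite inE /= unitfE gt_eqF ?invr_gt0.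
Qed.

Lemma le_expR_self (t : R) : t <= expR t.
Proof. have := expR_ge1Dx t; lra. Qed.

Lemma ln_nat_ge0 (n : nat) : 0 <= ln (n%:R : R).
Proof. by case: n => [|n]; [rewrite ln0|rewrite ln_ge0 // ler1n]. Qed.

Lemma telesc (y : R) : 2 <= y -> ((y + 1) * ln (y + 1) ^+ 2)^-1 <= (ln y)^-1 - (ln (y + 1))^-1.
Proof.
move=> y2.
have y0 : 0 < y by lra.
have L0 : 0 < ln y by apply: ln_gt0; lra.
have LL : ln y <= ln (y + 1) by rewrite ler_ln ?posrE; lra.
have L10 : 0 < ln (y + 1) by lra.
have hd := ln_low y0.
have -> : (ln y)^-1 - (ln (y + 1))^-1 = (ln (y + 1) - ln y) * (ln y * ln (y + 1))^-1.
  by field; rewrite !gt_eqF.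
rewrite invfM; apply: ler_pM => //.
- by rewrite invr_ge0; lra.
- by rewrite invr_ge0 exprn_ge0 // ltW.
- rewrite lef_pV2 ?posrE ?exprn_gt0 ?mulr_gt0 // expr2.
  by apply: ler_pM => //; apply: ltW.
Qed.
End Det.
Section Prod.
Variable R : realType.
Variables (a : R) (gamma : nat -> R) (j0 : nat).
Hypothesis a0 : 0 < a.
Hypothesis g0 : forall k, 0 <= gamma k.
Hypothesis j02 : (2 <= j0)%N.
Hypothesis j0a : 2 * a <= j0%:R.

Definition qf (k : nat) : R := 1 - a / k%:R + gamma k.
Fixpoint Qf (k : nat) : R :=
  match k with 0 => 1 | k'.+1 => if (j0 < k'.+1)%N then Qf k' * qf k'.+1 else 1 end.

Lemma x_half n : (j0 <= n)%N -> a / n.+1%:R <= 2^-1.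
Proof.
move=> hn.
have h1 : (j0%:R <= n%:R :> R) by rewrite ler_nat.
have h2 : (n%:R + 1 = n.+1%:R :> R) by rewrite natr1.
have h : a <= 2^-1 * n.+1%:R by move: h1 h2; have := j0a; lra.
by rewrite ler_pdivrMr ?ltr0Sn // mulrC.
Qed.

Lemma qf_ge n : (j0 <= n)%N -> 1 - a / n.+1%:R <= qf n.+1.
Proof. by move=> hn; rewrite /qf lerDl. Qed.

Lemma qf_pos n : (j0 <= n)%N -> 0 < qf n.+1.
Proof. move=> hn; have := qf_ge hn; have := x_half hn; set x := a / _; lra. Qed.

Lemma Qf_S n : (j0 <= n)%N -> Qf n.+1 = Qf n * qf n.+1.
Proof. by move=> hn /=; rewrite ltnS hn. Qed.

Lemma Qf_pos n : 0 < Qf n.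
Proof.
elim: n => [|n IH] //=; case: ifP => // h.
by apply: mulr_gt0 => //; apply: qf_pos; rewrite -ltnS.
Qed.

Lemma Qf_j0 : Qf j0 = 1.
Proof. by case E: j0 => [|m] //=; rewrite -E ltnn. Qed.

Lemma Qf_ind (Pr : nat -> Prop) : Pr j0 -> (forall n, (j0 <= n)%N -> Pr n -> Pr n.+1) ->
  forall n, (j0 <= n)%N -> Pr n.
Proof.
move=> h0 hS n /subnK <-; elim: (n - j0)%N => [|i IH] //.
by rewrite addSn; apply: hS => //; rewrite leq_addl.
Qed.

Lemma Qf_up : forall n, (j0 <= n)%N ->
  Qf n <= expR (- a * ln n.+1%:R + a * ln j0.+1%:R + series gamma n.+1).
Proof.
apply: Qf_ind => [|n hn IH].
  rewrite Qf_j0 -expR0 ler_expR.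
  have : 0 <= series gamma j0.+1 by rewrite /series /=; apply: sumr_ge0.
  lra.
rewrite Qf_S //.
have hq : qf n.+1 <= expR (- (a / n.+1%:R) + gamma n.+1).
  by apply: le_trans (expR_ge1Dx _); rewrite /qf; set x := a / _; lra.
apply: le_trans (ler_pM _ _ IH hq) _.
- exact: ltW (Qf_pos n).
- exact: ltW (qf_pos hn).
rewrite -expRD ler_expR (seriesSr _ n.+1).
have hl := @ln_up R n.+1%:R (ltr0Sn _ _).
rewrite natr1 in hl.
have ha := ler_wpM2l (ltW a0) hl.
move: ha; rewrite mulrBr; set x := n.+1%:R^-1; rewrite -/x; lra.
Qed.

Lemma Qf_low : forall n, (j0 <= n)%N ->
  expR (- a * ln n%:R + a * ln j0%:R - 2 * a ^+ 2 * j0%:R^-1 + 2 * a ^+ 2 * n%:R^-1) <= Qf n.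
Proof.
apply: Qf_ind => [|n hn IH].
  by rewrite Qf_j0 -expR0 ler_expR; lra.
rewrite Qf_S //.
have n0 : 0 < n%:R :> R by rewrite ltr0n; exact: leq_trans (ltnW j02) hn.
have x0 : 0 <= a / n.+1%:R by rewrite divr_ge0 // ltW.
have hq : expR (- (a / n.+1%:R + 2 * (a / n.+1%:R) ^+ 2)) <= qf n.+1.
  apply: le_trans (qf_ge hn); exact: exp_low (x_half hn).
apply: le_trans _ (ler_pM _ _ IH hq); last first.
- exact: ltW (expR_gt0 _).
- exact: ltW (expR_gt0 _).
rewrite -expRD ler_expR.
have hl := @ln_low R n%:R n0; rewrite natr1 in hl.
set w := n.+1%:R^-1 in hl *.
set u := n%:R^-1.
have hw : w + w ^+ 2 <= u.
  rewrite -subr_ge0.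
  have -> : u - (w + w ^+ 2) = (n%:R * n.+1%:R ^+ 2)^-1 :> R.
    rewrite /u /w -natr1; field.
    by rewrite (gt_eqF n0) gt_eqF // addr_gt0.
  by rewrite invr_ge0 mulr_ge0 // exprn_ge0.
have ha := ler_wpM2l (ltW a0) hl.
have hb := ler_wpM2l (sqr_ge0 a) hw.
move: ha hb; rewrite -/w -/u; set v := j0%:R^-1; lra.
Qed.

Lemma Qf_up2 (G : R) : (forall n, series gamma n <= G) ->
  forall n, (j0 <= n)%N -> Qf n <= expR (a * ln j0.+1%:R + G) * expR (- a * ln n%:R).
Proof.
move=> hG n hn; apply: (le_trans (Qf_up hn)); rewrite -expRD ler_expR.
have n0 : 0 < n%:R :> R by rewrite ltr0n; exact: leq_trans (ltnW j02) hn.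
have : ln n%:R <= ln n.+1%:R :> R by rewrite ler_ln ?posrE ?ltr0Sn // -natr1 lerDl.
move=> h; have := ler_wpM2l (ltW a0) h; have := hG n.+1; lra.
Qed.

Lemma Qf_low2 : forall n, (j0 <= n)%N ->
  expR (a * ln j0%:R - 2 * a ^+ 2 * j0%:R^-1) * expR (- a * ln n%:R) <= Qf n.
Proof.
move=> n hn; apply: le_trans (Qf_low hn); rewrite -expRD ler_expR.
have : 0 <= 2 * a ^+ 2 * n%:R^-1 by rewrite mulr_ge0 ?invr_ge0 // mulr_ge0 // sqr_ge0.
set u := n%:R^-1; set v := j0%:R^-1; lra.
Qed.
End Prod.
Section Det2.
Variable R : realType.

Lemma sq_le_exp (eps L : R) : 0 < eps -> 0 < L -> L ^+ 2 * eps ^+ 2 <= 4 * expR (eps * L).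
Proof.
move=> e0 L0.
have h := le_expR_self (eps * L / 2).
have h0 : 0 <= eps * L / 2 by rewrite divr_ge0 // mulr_ge0 // ltW.
have h2 := ler_pM h0 h0 h h.
have -> : expR (eps * L) = expR (eps * L / 2) * expR (eps * L / 2).
  by rewrite -expRD; congr expR; field.
move: h2; set E := expR _; set x := eps * L / 2.
have -> : L ^+ 2 * eps ^+ 2 = 4 * (x * x) by rewrite /x; field.
move=> h2; lra.
Qed.

Lemma case1_e (a b C K1 L Q : R) : 0 < C -> 0 < K1 -> 0 < L -> 1 < b - a ->
  K1 * expR (- a * L) <= Q ->
  C / expR (b * L) / Q <= (C / K1 * (4 / (b - a - 1) ^+ 2)) * (expR L * L ^+ 2)^-1.
Proof.
move=> C0 K0 L0 ba hQ.
set eps := b - a - 1.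
have e0 : 0 < eps by rewrite /eps; lra.
have Q0 : 0 < Q by apply: lt_le_trans hQ; rewrite mulr_gt0 // expR_gt0.
have Eb : expR (b * L) = expR L * expR (eps * L) * expR (a * L).
  by rewrite -!expRD; congr expR; rewrite /eps; ring.
have Ena : expR (- a * L) = (expR (a * L))^-1 by rewrite mulNr expRN.
rewrite Eb -mulrA -invfM ler_pdivrMr; last by rewrite !mulr_gt0 ?expR_gt0.
apply: le_trans (_ : _ <= (C / K1 * (4 / eps ^+ 2)) * (expR L * L ^+ 2)^-1 *
   (expR L * expR (eps * L) * expR (a * L) * (K1 * expR (- a * L)))) _; last first.
  apply: ler_wpM2l; first by apply: ltW; rewrite !mulr_gt0 ?invr_gt0 ?mulr_gt0 ?divr_gt0 ?expR_gt0 ?exprn_gt0.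
  by apply: ler_wpM2l => //; rewrite !mulr_ge0 ?expR_ge0.
rewrite Ena.
have -> : C / K1 * (4 / eps ^+ 2) * (expR L * L ^+ 2)^-1 *
   (expR L * expR (eps * L) * expR (a * L) * (K1 * (expR (a * L))^-1)) =
   C * (4 * expR (eps * L)) / (L ^+ 2 * eps ^+ 2).
  by field; rewrite !gt_eqF ?expR_gt0.
rewrite ler_pdivlMr; last by rewrite mulr_gt0 ?exprn_gt0.
apply: ler_wpM2l; first exact: ltW.
exact: sq_le_exp.
Qed.

Lemma case2_e (a b C K1 L Q : R) : 0 < C -> 0 < K1 -> 0 < L ->
  K1 * expR (- a * L) <= Q ->
  C / expR (b * L) / (Q * expR ((a + 1 - b) * L) * L ^+ 2) <= (C / K1) * (expR L * L ^+ 2)^-1.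
Proof.
move=> C0 K0 L0 hQ.
have Q0 : 0 < Q by apply: lt_le_trans hQ; rewrite mulr_gt0 // expR_gt0.
have E2 : expR ((a + 1 - b) * L) = expR (a * L) * expR L * (expR (b * L))^-1.
  by rewrite -expRN -!expRD; congr expR; ring.
have Ena : expR (- a * L) = (expR (a * L))^-1 by rewrite mulNr expRN.
rewrite E2 -mulrA -invfM ler_pdivrMr; last by rewrite !mulr_gt0 ?expR_gt0 ?invr_gt0 ?expR_gt0 ?exprn_gt0.
apply: le_trans (_ : _ <= (C / K1) * (expR L * L ^+ 2)^-1 *
   (expR (b * L) * (K1 * expR (- a * L) * (expR (a * L) * expR L * (expR (b * L))^-1) * L ^+ 2))) _; last first.
  apply: ler_wpM2l; first by apply: ltW; rewrite !mulr_gt0 ?invr_gt0 ?mulr_gt0 ?divr_gt0 ?expR_gt0 ?exprn_gt0.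
  apply: ler_wpM2l; first exact: expR_ge0.
  apply: ler_wpM2r; first exact: sqr_ge0.
  by apply: ler_wpM2r => //; rewrite !mulr_ge0 ?invr_ge0 ?expR_ge0.
rewrite Ena.
have -> : C / K1 * (expR L * L ^+ 2)^-1 * (expR (b * L) *
   (K1 * (expR (a * L))^-1 * (expR (a * L) * expR L * (expR (b * L))^-1) * L ^+ 2)) = C.
  by field; rewrite !gt_eqF ?expR_gt0 ?exprn_gt0.
done.
Qed.
End Det2.
Lemma main_gen d (T : measurableType d) (R : realType) (P : probability T R)
  (F : nat -> set (set T)) (V : nat -> T -> R) (gamma : nat -> R) (a b C : R)
  (j0 : nat) (v : nat -> R) (K : R) :
  filtration F -> (forall k, meas_wrt (F k) (V k)) -> (forall k x, 0 <= V k x) -> 0 < C ->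
  (forall k, (0 < k)%N -> exists Y : T -> \bar R,
      cond_exp_version P (F k.-1) (V k) Y /\
      {ae P, forall x, (Y x <= ((1 - a / k%:R + gamma k) * V k.-1 x
                                 + C / (k%:R `^ b))%:E)%E}) ->
  (forall n, 0 <= v n) -> (forall n, (j0 <= n)%N -> 0 < v n) ->
  (forall n, (j0 <= n)%N -> 0 <= 1 - a / n.+1%:R + gamma n.+1) ->
  (forall n, (j0 <= n)%N -> (1 - a / n.+1%:R + gamma n.+1) * v n <= v n.+1) ->
  0 <= K ->
  (forall n, (j0 <= n)%N -> C / (n.+1%:R `^ b) / v n.+1 <= K / ln n%:R - K / ln n.+1%:R) ->
  {ae P, forall x, exists M : R, forall n, (j0 <= n)%N -> V n x <= M * v n}.
Proof.
move=> hF mV V0 C0 H v0 vpos q0 vstep K0 eb.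
pose W n x := V n x / v n.
pose e n := C / (n%:R `^ b) / v n.
pose S n := - (K / ln (n%:R : R)).
have mW : forall n, meas_wrt (F n) (W n).
  move=> n B mB; have := mV n _ (@mulrr_measurable R setT (v n)^-1 measurableT B mB).
  by rewrite setTI.
have W0 : forall n x, 0 <= W n x by move=> n x; rewrite /W divr_ge0.
have e0 : forall n, 0 <= e n.
  by move=> n; rewrite /e !divr_ge0 ?powR_ge0 // ltW.
have Sinc : forall n, (j0 <= n)%N -> S n + e n.+1 <= S n.+1.
  move=> n hn; have := eb n hn; rewrite /S /e.
  set x := C / _ / _; set y := K / _; set z := K / _; lra.
have Sle0 : forall n, S n <= 0.
  by move=> n; rewrite /S oppr_le0 divr_ge0 // ln_nat_ge0.
have hyp : forall n, (j0 <= n)%N -> forall A, F n A ->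
     (\int[P]_(x in A) (W n.+1 x)%:E <= \int[P]_(x in A) (W n x)%:E + (e n.+1)%:E * P A)%E.
  move=> n hn A FA.
  have [Y [hY hae]] := H n.+1 (ltn0Sn n).
  apply: (stepB hF (mV n) (mV n.+1) (V0 n) (V0 n.+1) hY hae) => //.
  - exact: q0.
  - by rewrite divr_ge0 ?powR_ge0 // ltW.
  - exact: vpos.
  - by apply: vpos; apply: leqW.
  - exact: vstep.
have := core_ae hF mW W0 e0 Sinc hyp Sle0.
apply: filterS => x [M hM]; exists M => n hn.
have := hM n hn; rewrite /W => h.
have vn := vpos n hn.
rewrite -(divfK (negbT (gt_eqF vn)) (V n x)); by rewrite ler_wpM2r // ltW.
Qed.
Lemma ser_le (R : realType) (g : nat -> R) : (forall k, 0 <= g k) -> cvgn (series g) ->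
  forall n, series g n <= limn (series g).
Proof.
move=> g0 cg; apply: nondecreasing_cvgn_le => //.
move=> i j ij; rewrite -(subnK ij); elim: (j - i)%N => [|k IH] //.
by rewrite addSn seriesSr; apply: le_trans IH _; rewrite lerDl.
Qed.

Lemma powR_nat (R : realType) (n : nat) (b : R) : (n.+1%:R : R) `^ b = expR (b * ln n.+1%:R).
Proof. by rewrite /powR ifF // gt_eqF // ltr0Sn. Qed.

Lemma powR_nat' (R : realType) (n : nat) (b : R) : (0 < n)%N -> (n%:R : R) `^ b = expR (b * ln n%:R).
Proof. by case: n => // n _; exact: powR_nat. Qed.

Unset Implicit Arguments.
Theorem lemmaA9 (d : measure_display) (T : measurableType d) (R : realType)
  (P : probability T R) (F : nat -> set (set T)) (V : nat -> T -> R)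
  (gamma : nat -> R) (a b C : R) :
  filtration F ->
  (forall k, meas_wrt (F k) (V k)) ->
  (forall k x, 0 <= V k x) ->
  0 < a -> 1 < b -> 0 < C ->
  (forall k, 0 <= gamma k) -> cvgn (series gamma) ->
  (forall k, (0 < k)%N -> exists Y : T -> \bar R,
      cond_exp_version P (F k.-1) (V k) Y /\
      {ae P, forall x, (Y x <= ((1 - a / k%:R + gamma k) * V k.-1 x
                                 + C / (k%:R `^ b))%:E)%E}) ->
  (1 < b - a -> {ae P, forall x, exists M : R, exists N : nat,
      forall k, (N <= k)%N -> V k x <= M * (k%:R `^ (- a))}) /\
  (b - a <= 1 -> {ae P, forall x, exists M : R, exists N : nat,
      forall k, (N <= k)%N -> V k x <= M * ((ln (k%:R : R)) ^+ 2 / (k%:R `^ (b - 1)))}).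
Proof.
move=> hF mV V0 a0 b1 C0 g0 cg H.
pose j0 := (Num.bound (2 * a)).+2.
have j02 : (2 <= j0)%N by [].
have j0a : 2 * a <= j0%:R.
  have h := archi_boundP (ltW (mulr_gt0 (ltr0Sn R 1) a0)).
  apply: (le_trans (ltW h)); rewrite ler_nat /j0; exact: leqW (leqW (leqnn _)).
set G := limn (series gamma).
have hG := ser_le g0 cg.
set K1 := expR (a * ln j0%:R - 2 * a ^+ 2 * j0%:R^-1).
set K2 := expR (a * ln j0.+1%:R + G).
have K10 : 0 < K1 by exact: expR_gt0.
have Qlow := Qf_low2 a0 g0 j02 j0a.
have Qup := Qf_up2 a0 g0 j02 j0a hG.
have Qpos := Qf_pos g0 j0a.
have Lpos : forall n, (j0 <= n)%N -> 0 < ln (n%:R : R).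
  move=> n hn; apply: ln_gt0; rewrite ltr1n; exact: leq_trans j02 hn.
have telK : forall K, 0 <= K -> forall n, (j0 <= n)%N ->
    K * (expR (ln (n.+1%:R : R)) * ln (n.+1%:R : R) ^+ 2)^-1 <= K / ln n%:R - K / ln n.+1%:R.
  move=> K K0 n hn; rewrite lnK ?posrE ?ltr0Sn // -mulrBr; apply: ler_wpM2l => //.
  have y2 : (2 : R) <= n%:R by rewrite (ler_nat R 2 n); exact: leq_trans j02 hn.
  by have := telesc y2; rewrite natr1.
split => [ba|ba].
- set K := C / K1 * (4 / (b - a - 1) ^+ 2).
  have K0 : 0 <= K by rewrite /K !mulr_ge0 ?invr_ge0 ?sqr_ge0 ?ltW.
  have hae : {ae P, forall x, exists M : R, forall n, (j0 <= n)%N -> V n x <= M * Qf a gamma j0 n}.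
  apply: (@main_gen d T R P F V gamma a b C j0 (Qf a gamma j0) K hF mV V0 C0 H
    (fun n => ltW (Qpos n)) (fun n _ => Qpos n) (fun n hn => ltW (qf_pos g0 j0a hn))) => //.
  + by move=> n hn; rewrite (Qf_S a gamma hn) mulrC.
  + move=> n hn; apply: le_trans (telK K K0 n hn); rewrite powR_nat.
    apply: case1_e => //; first by apply: Lpos; exact: leqW.
    exact: Qlow (leqW hn).
  apply: filterS hae => x [M hM].
  exists (`|M| * K2), j0 => k hk.
  apply: (le_trans (hM k hk)).
  have k0 : (0 < k)%N by apply: leq_trans _ hk.
  rewrite powR_nat' // -mulrA.
  apply: le_trans (_ : _ <= `|M| * Qf a gamma j0 k) _.
    by rewrite ler_wpM2r ?ler_norm // ltW.
  apply: ler_wpM2l => //; exact: Qup hk.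
- set K := C / K1.
  have K0 : 0 <= K by rewrite /K divr_ge0 ?ltW.
  set v := fun n => Qf a gamma j0 n * expR ((a + 1 - b) * ln (n%:R : R)) * ln (n%:R : R) ^+ 2.
  have hae : {ae P, forall x, exists M : R, forall n, (j0 <= n)%N -> V n x <= M * v n}.
  apply: (@main_gen d T R P F V gamma a b C j0 v K hF mV V0 C0 H) => //.
  + by move=> n; rewrite /v !mulr_ge0 ?expR_ge0 ?ln_nat_ge0 //; exact: ltW (Qpos n).
  + by move=> n hn; rewrite /v !mulr_gt0 ?expR_gt0 ?exprn_gt0 //; apply: Lpos.
  + by move=> n hn; apply: ltW (qf_pos g0 j0a hn).
  + move=> n hn; rewrite /v (Qf_S a gamma hn).
    have q0 := ltW (qf_pos g0 j0a hn).
    have l0 := Lpos n hn.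
    have lle : ln (n%:R : R) <= ln n.+1%:R.
      by rewrite ler_ln ?posrE ?ltr0Sn ?ltr0n -?natr1 ?lerDl //; exact: leq_trans (ltnW j02) hn.
    have -> : (1 - a / n.+1%:R + gamma n.+1) * (Qf a gamma j0 n * expR ((a + 1 - b) * ln (n%:R : R)) * ln (n%:R : R) ^+ 2) = Qf a gamma j0 n * qf a gamma n.+1 * expR ((a + 1 - b) * ln (n%:R : R)) * ln (n%:R : R) ^+ 2.
      by rewrite /qf; ring.
    have A0 : 0 <= Qf a gamma j0 n * qf a gamma n.+1 by rewrite mulr_ge0 // ltW.
    apply: ler_pM.
    * by rewrite mulr_ge0 ?expR_ge0.
    * exact: sqr_ge0.
    * by apply: ler_wpM2l => //; rewrite ler_expR; apply: ler_wpM2l => //; lra.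
    * by apply: ler_pM => //; apply: ltW.
  + move=> n hn; apply: le_trans (telK K K0 n hn); rewrite powR_nat /v.
    apply: case2_e => //; first by apply: Lpos; exact: leqW.
    exact: Qlow (leqW hn).
  apply: filterS hae => x [M hM].
  exists (`|M| * K2), j0 => k hk.
  apply: (le_trans (hM k hk)).
  have k0 : (0 < k)%N by apply: leq_trans _ hk.
  apply: le_trans (_ : _ <= `|M| * v k) _.
    by rewrite ler_wpM2r ?ler_norm // /v !mulr_ge0 ?expR_ge0 ?ln_nat_ge0 //; exact: ltW (Qpos k).
  rewrite -mulrA; apply: ler_wpM2l => //.
  rewrite powR_nat' // /v.
  have e : ln (k%:R : R) ^+ 2 / expR ((b - 1) * ln k%:R) =
      expR (- a * ln k%:R) * expR ((a + 1 - b) * ln k%:R) * ln (k%:R : R) ^+ 2.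
    rewrite -expRD mulrC -expRN; congr (_ * _); congr expR; ring.
  rewrite e mulrA; apply: ler_wpM2r; first exact: sqr_ge0.
  rewrite mulrA; apply: ler_wpM2r; first exact: expR_ge0.
  exact: Qup hk.
Qed.
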